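(* Let $n=sk+r$ with integers $s\geq 2$, $k\geq 3$ and $1\leq r\leq k-1$. Then $t_2(n,k)\geq \chi(\overline{K}(n,k))$ in each of the following cases: (a) $k\geq 4$ and $s\geq 7$; (b) $k=3$ and $s\geq 17$; (c) $k\geq 7$ and $s=6$.
   Context: $\overline{K}(n,k)$ is the complement of the Kneser graph: its vertices are the $k$-element subsets of $[n]$, two distinct ones adjacent iff they intersect. $\chi$ is chromatic number. With $l=\lceil \frac{n-1}{2(k-1)}\rceil$, define $$t_2(n,k)=\sum_{i=1}^{\lceil n/2\rceil}\left\lfloor \frac{1}{l+1}\binom{n-i}{k-1}\right\rfloor.$$ *)

(* Defs.v *)
From mathcomp Require Import all_boot.
Set Implicit Arguments. Unset Strict Implicit. Unset Printing Implicit Defensive.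

Definition colorable (V : finType) (adj : rel V) (c : nat) : bool :=
  [exists f : {ffun V -> 'I_c}, forall x : V, forall y : V, adj x y ==> (f x != f y)].

Lemma colorable_card (V : finType) (adj : rel V) (Hirr : irreflexive adj) :
  exists c, colorable adj c.
Proof.
exists #|V|; apply/existsP; exists [ffun x => enum_rank x].
apply/forallP=> x; apply/forallP=> y; apply/implyP=> hxy; rewrite !ffunE.
apply/negP=> /eqP /enum_rank_inj exy; subst y.
by rewrite Hirr in hxy.
Qed.

Definition chromatic_number (V : finType) (adj : rel V) (Hirr : irreflexive adj) : nat :=
  ex_minn (colorable_card Hirr).

Definition ksubset (n k : nat) := {A : {set 'I_n} | #|A| == k}.

Definition cKneser_adj (n k : nat) : rel (ksubset n k) :=
  fun A B => (A != B) && (val A :&: val B != set0).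

Lemma cKneser_irr (n k : nat) : irreflexive (@cKneser_adj n k).
Proof. by move=> A; rewrite /cKneser_adj eqxx. Qed.

Definition chi_cKneser (n k : nat) : nat := chromatic_number (@cKneser_irr n k).

(* l = ceil((n-1) / (2(k-1))) *)
Definition l_param (n k : nat) : nat :=
  (n.-1 + (2 * k.-1).-1) %/ (2 * k.-1).

Definition t2 (n k : nat) : nat :=
  \sum_(1 <= i < (uphalf n).+1) 'C(n - i, k.-1) %/ (l_param n k).+1.

(* Main.v *)
Require Import Defs.
From mathcomp Require Import all_boot.
From mathcomp Require Import zify.
Set Implicit Arguments. Unset Strict Implicit. Unset Printing Implicit Defensive.

Section Hall.
Variables (J C : finType) (c0 : C) (E : J -> C -> bool).

Definition nbh (X : {set J}) (c : C) := [exists j in X, E j c].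

Definition hallc (b : C -> nat) (A : {set J}) :=
  forall X : {set J}, X \subset A -> #|X| <= \sum_(c | nbh X c) b c.

Lemma hall_cap_aux N : forall (A : {set J}) (b : C -> nat), #|A| <= N -> hallc b A ->
  exists f : J -> C, (forall j, j \in A -> E j (f j)) /\
                     (forall c, #|[set j in A | f j == c]| <= b c).
Proof.
elim: N => [|N IH] A b hN hA.
  exists (fun _ => c0); split=> [j jA|c].
    by move: hN; rewrite leqn0 cards_eq0 => /eqP A0; rewrite A0 inE in jA.
  by move: hN; rewrite leqn0 cards_eq0 => /eqP ->; rewrite (_ : [set _ in _ | _] = set0) ?cards0 //;
     apply/setP => j; rewrite !inE.
case: (boolP (A == set0)) => [/eqP A0|An0].
  exists (fun _ => c0); split=> [j|c]; first by rewrite A0 inE.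
  by rewrite (_ : [set _ in _ | _] = set0) ?cards0 //; apply/setP => j; rewrite A0 !inE.
case: (boolP [exists X : {set J}, [&& X \subset A, X != set0, X != A &
           #|X| == \sum_(c | nbh X c) b c]]).
- case/existsP => X /and4P [XA X0 XnA /eqP tight].
  have XpA : X \proper A by rewrite properEneq XnA XA.
  have [f1 [E1 F1]] : exists f : J -> C, (forall j, j \in X -> E j (f j)) /\
                     (forall c, #|[set j in X | f j == c]| <= b c).
    apply: (IH X b); first by have := proper_card XpA; lia.
    by move=> Y YX; apply: hA; apply: subset_trans YX XA.
  pose b2 c := if nbh X c then 0 else b c.
  have [f2 [E2 F2]] : exists f : J -> C, (forall j, j \in A :\: X -> E j (f j)) /\
                     (forall c, #|[set j in A :\: X | f j == c]| <= b2 c).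
    apply: (IH (A :\: X) b2).
      have : #|X| > 0 by rewrite card_gt0.
      have := cardsID X A; rewrite (setIidPr XA); lia.
    move=> Y YAX.
    have YX : [disjoint Y & X].
      apply/pred0P => j /=; apply/negP => /andP [jY jX].
      by move: (subsetP YAX j jY); rewrite !inE jX.
    have YXA : Y :|: X \subset A.
      rewrite subUset XA andbT; apply: subset_trans YAX _; exact: subsetDl.
    have := hA _ YXA.
    rewrite cardsU (_ : Y :&: X = set0) ?cards0 ?subn0; last first.
      by apply/setP => j; rewrite !inE; apply/negP => /andP [jY jX];
         move: (subsetP YAX j jY); rewrite !inE jX.
    rewrite tight => H.
    have H2 : \sum_(c | nbh (Y :|: X) c) b c <=
              \sum_(c | nbh Y c) b2 c + \sum_(c | nbh X c) b c.
      rewrite [X in _ <= X + _]big_mkcond [X in _ <= _ + X]big_mkcond -big_split /=.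
      rewrite big_mkcond; apply: leq_sum => c _.
      rewrite /b2; case: (boolP (nbh (Y :|: X) c)) => // /existsP [j /andP [jYX Ejc]].
      move: jYX; rewrite inE => /orP [jY|jX].
        have -> : nbh Y c by apply/existsP; exists j; rewrite jY.
        by case: ifP; rewrite ?add0n ?addn0.
      have -> : nbh X c by apply/existsP; exists j; rewrite jX.
      by rewrite if_same.
    lia.
  exists (fun j => if j \in X then f1 j else f2 j); split.
    move=> j jA; case: ifP => jX; first exact: E1.
    by apply: E2; rewrite inE jX.
  move=> c.
  set S := [set j in A | _].
  have SU : S \subset [set j in X | f1 j == c] :|: [set j in A :\: X | f2 j == c].
    apply/subsetP => j; rewrite !inE; case: ifP => jX /andP [jA fj]; rewrite ?fj ?jA //.
  apply: leq_trans (subset_leq_card SU) _; apply: leq_trans (leq_card_setU _ _) _.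
  have := F1 c; have := F2 c; rewrite /b2.
  case: (boolP (nbh X c)) => hc; first lia.
  have -> : [set j in X | f1 j == c] = set0.
    apply/setP => j; rewrite !inE; apply/negP => /andP [jX /eqP fj].
    by move/negP: hc; apply; apply/existsP; exists j; rewrite jX -fj E1.
  by rewrite cards0.
- rewrite negb_exists => /forallP notight.
  case/set0Pn: An0 => j0 j0A.
  have : 0 < \sum_(c | nbh [set j0] c) b c.
    by have := hA [set j0]; rewrite sub1set j0A cards1; apply.
  rewrite lt0n sum_nat_eq0 negb_forall => /existsP [c1]; rewrite negb_imply => /andP [Nc1 bc1].
  have Ec1 : E j0 c1.
    by case/existsP: Nc1 => j /andP []; rewrite inE => /eqP ->.
  pose b' c := if c == c1 then (b c).-1 else b c.
  have [f' [E' F']] : exists f : J -> C, (forall j, j \in A :\ j0 -> E j (f j)) /\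
                     (forall c, #|[set j in A :\ j0 | f j == c]| <= b' c).
    apply: (IH (A :\ j0) b').
      by move: hN; rewrite (cardsD1 j0 A) j0A.
    move=> Y YA.
    case: (boolP (Y == set0)) => [/eqP -> | Y0]; first by rewrite cards0.
    have YA' : Y \subset A by apply: subset_trans YA (subsetDl _ _).
    have YnA : Y != A.
      apply/negP => /eqP YeA; move: (subsetP YA j0); rewrite YeA j0A !inE eqxx /=.
      by move/(_ isT).
    have := notight Y; rewrite YA' Y0 YnA /= => /negP nt.
    have lt : #|Y| < \sum_(c | nbh Y c) b c.
      by rewrite ltn_neqAle hA // andbT; apply/negP.
    have : \sum_(c | nbh Y c) b c <= \sum_(c | nbh Y c) b' c + 1.
      rewrite big_mkcond [X in _ <= X + _]big_mkcond.
      rewrite (bigD1 c1) //= [X in _ <= X + _](bigD1 c1) //=.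
      rewrite -addnA [X in _ <= _ + X]addnC addnA.
      apply: leq_add.
        rewrite /b' eqxx; case: (nbh Y c1); lia.
      apply: leq_sum => c /negbTE cc1.
      by rewrite /b' cc1.
    lia.
  exists (fun j => if j == j0 then c1 else f' j); split.
    move=> j jA; case: ifP => [/eqP -> //|jj0].
    by apply: E'; rewrite !inE jj0.
  move=> c.
  set S := [set j in A | _].
  have SU : S \subset j0 |: [set j in A :\ j0 | f' j == c].
    apply/subsetP => j; rewrite !inE; case: ifP => //= jj0.
  have := F' c; rewrite /b'.
  case: (boolP (c == c1)) => [/eqP cc1|cc1] Fc.
    apply: leq_trans (subset_leq_card SU) _; rewrite cardsU1.
    subst c; lia.
  have SS : S \subset [set j in A :\ j0 | f' j == c].
    apply/subsetP => j; rewrite !inE; case: ifP => jj0 /andP [jA fj].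
      by move/eqP: fj => fj; rewrite fj eqxx in cc1.
    by rewrite fj jA.
  exact: leq_trans (subset_leq_card SS) Fc.
Qed.

Lemma hall_cap (A : {set J}) (b : C -> nat) : hallc b A ->
  exists f : J -> C, (forall j, j \in A -> E j (f j)) /\
                     (forall c, #|[set j in A | f j == c]| <= b c).
Proof. exact: hall_cap_aux. Qed.

End Hall.

Lemma sum_le_eq (I : finType) (x y : I -> nat) :
  (forall i, x i <= y i) -> \sum_i x i = \sum_i y i -> forall i, x i = y i.
Proof.
move=> hle hs i.
have : \sum_i (y i - x i) == 0 by rewrite sumnB // hs subnn.
rewrite sum_nat_eq0 => /forallP /(_ i) /=; rewrite subn_eq0 => h.
by apply/eqP; rewrite eqn_leq hle h.
Qed.

Lemma wassign (J C : finType) (c0 : C) (w : J -> C -> nat) (D : nat) (b : C -> nat) :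
  0 < D -> (forall j, \sum_c w j c = D) -> (forall c, \sum_j w j c = D * b c) ->
  exists f : J -> C, (forall j, 0 < w j (f j)) /\ (forall c, #|[set j | f j == c]| = b c).
Proof.
move=> D0 hrow hcol.
pose E j c := 0 < w j c.
have hH : hallc E b [set: J].
  move=> X _.
  rewrite -(leq_pmul2l D0).
  have e1 : D * #|X| = \sum_(j in X) \sum_c w j c.
    rewrite (eq_bigr (fun _ => D)) ?sum_nat_const; first by rewrite mulnC.
    by move=> j _; rewrite hrow.
  rewrite e1.
  have e2 : \sum_(j in X) \sum_c w j c = \sum_(j in X) \sum_(c | nbh E X c) w j c.
    apply: eq_bigr => j jX; rewrite [LHS](bigID (nbh E X)) /= [X in _ + X]big1 ?addn0 // => c /negP nc.
    apply/eqP; rewrite -leqn0 leqNgt; apply/negP => wpos; apply: nc.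
    by apply/existsP; exists j; rewrite jX.
  rewrite e2 exchange_big /= big_distrr /=; apply: leq_sum => c _.
  rewrite -hcol [X in _ <= X]big_mkcond /= big_mkcond /=; apply: leq_sum => j _.
  by case: (j \in X).
have [f [Ef Ff]] := hall_cap c0 hH.
exists f; split => [j|]; first exact: Ef.
have Ff' : forall c, #|[set j | f j == c]| <= b c.
  by move=> c; have := Ff c; rewrite (_ : [set j in [set: J] | f j == c] = [set j | f j == c]) //;
     apply/setP => j; rewrite !inE.
apply: sum_le_eq => //.
have eb : D * \sum_c b c = D * #|J|.
  rewrite big_distrr /= -(eq_bigr _ (fun c _ => hcol c)) exchange_big /=.
  rewrite (eq_bigr (fun _ => D)) ?sum_nat_const; first by rewrite mulnC.
  by move=> j _; rewrite hrow.
have -> : \sum_c b c = #|J| by apply/eqP; rewrite -(eqn_pmul2l D0) eb.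
rewrite -sum1_card (partition_big f xpredT) //=; apply: eq_bigr => c _.
rewrite -sum1_card; apply: eq_bigl => j; by rewrite !inE.
Qed.


Lemma hockey n k h : 0 < k -> h <= n ->
  \sum_(1 <= i < h.+1) 'C(n - i, k.-1) + 'C(n - h, k) = 'C(n, k).
Proof.
move=> k0; elim: h => [|h IH] hn; first by rewrite big_geq // subn0.
rewrite big_nat_recr //= -addnA -IH ?(ltnW hn) //; congr (_ + _).
have -> : n - h = (n - h.+1).+1 by lia.
by clear IH; case: k k0 => // k _; rewrite binS addnC.
Qed.

Lemma pow2bin a k : 2 ^ k * 'C(a, k) <= 'C(a.*2, k).
Proof.
elim: k => [|k IH]; first by rewrite !bin0.
rewrite -(leq_pmul2l (ltn0Sn k)) mul_bin_left mulnCA mul_bin_left.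
rewrite expnS -mulnA mulnCA.
have h1 : 2 * (a - k) <= a.*2 - k by lia.
move: (leq_mul h1 IH); set t := a - k; set u := a.*2 - k; set c := 'C(a, k); set e := 2 ^ k; nia.
Qed.

Lemma binmono n j : 4 <= j -> j.*2 <= n -> 'C(n, 4) <= 'C(n, j).
Proof.
elim: j => // j IH; rewrite leq_eqVlt => /orP [/eqP <- //| hj] hn.
have H : 'C(n, 4) <= 'C(n, j) by apply: IH => //; lia.
rewrite -(leq_pmul2l (ltn0Sn j)) mul_bin_left.
by apply: leq_mul => //; lia.
Qed.

Lemma bin3E n : 'C(n, 3) * 6 = n * n.-1 * n.-2.
Proof. by rewrite (bin_ffact n 3) !ffactnS ffactn0 muln1 !mulnA. Qed.

Lemma bin4E n : 'C(n, 4) * 24 = n * n.-1 * n.-2 * n.-2.-1.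
Proof. by rewrite (bin_ffact n 4) !ffactnS ffactn0 muln1 !mulnA. Qed.

Lemma t2_low n k : 0 < k -> 0 < n ->
  'C(n, k) <= (l_param n k).+1 * t2 n k + uphalf n * l_param n k + 'C(n./2, k).
Proof.
move=> k0 n0.
have hn : uphalf n <= n by lia.
rewrite -(@hockey n k (uphalf n) k0 hn).
have -> : n - uphalf n = n./2 by lia.
rewrite leq_add2r /t2 big_distrr /=.
have -> : uphalf n * l_param n k = \sum_(1 <= i < (uphalf n).+1) l_param n k.
  by rewrite sum_nat_const_nat subn1.
rewrite -big_split /=.
apply: leq_sum => i _.
set x := 'C(n - i, k.-1); set L := (l_param n k).+1.
rewrite {1}(divn_eq x L) mulnC leq_add2l -ltnS.
exact: ltn_pmod.
Qed.

Lemma combine n s k : let l := l_param n k in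
  l.+1 <= s -> s * 'C(n./2, k) + s * uphalf n * l <= (s - l.+1) * 'C(n, k) ->
  'C(n, k) <= l.+1 * t2 n k + uphalf n * l + 'C(n./2, k) ->
  'C(n, k) <= s * t2 n k.
Proof.
move=> l hL H2 H3.
rewrite -(leq_pmul2l (ltn0Sn l)).
move: H2 H3; set A := 'C(n, k); set B := 'C(n./2, k); set T := t2 n k; set h := uphalf n.
move=> H2 H3.
have H4 := leq_mul (leqnn s) H3.
move: H2 H4; have [d ->] : exists d, s = d + l.+1 by exists (s - l.+1); lia.
rewrite addnK => H2 H4; nia.
Qed.

Lemma lbound n k : 1 < k -> 0 < n -> l_param n k * (2 * k.-1) <= n + 2 * k.-1 - 2.
Proof.
move=> k1 n0; apply: leq_trans (leq_divM _ _) _; lia.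
Qed.

Lemma binhalf n k : 2 ^ k * 'C(n./2, k) <= 'C(n, k).
Proof.
apply: leq_trans (pow2bin _ _) _; apply: leq_bin2l; lia.
Qed.

Lemma poly_b n : 52 <= n -> n * (n+1) * (n+2) <= 2 * (n * n.-1 * n.-2).
Proof. move=> h. have [m ->] : exists m, n = m + 52 by exists (n-52); lia.
have -> : (m+52).-2 = m + 50 by lia. have -> : (m+52).-1 = m+51 by lia.
nia. Qed.

Lemma fin_b s A B d Y : 8 * B <= A -> s + 4 <= 8 * d -> 2 * (s * Y) <= A ->
  s * B + s * Y <= d * A.
Proof.
move=> h1 h2 h3.
have X1 : s * (8 * B) <= s * A by rewrite leq_mul2l h1 orbT.
have X2 : (s + 4) * A <= 8 * d * A by rewrite leq_mul2r h2 orbT.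
rewrite -(leq_pmul2l (isT : 0 < 8)) mulnA; apply: leq_trans X2.
have -> : 8 * (s * B + s * Y) = s * (8 * B) + 4 * (2 * (s * Y)).
  by clear; nia.
by rewrite mulnDl; apply: leq_add => //; rewrite leq_mul2l h3 orbT.
Qed.

Lemma case_b n s r : n = s * 3 + r -> 17 <= s -> 1 <= r <= 2 ->
  let l := l_param n 3 in
  l.+1 <= s /\ s * 'C(n./2, 3) + s * uphalf n * l <= (s - l.+1) * 'C(n, 3).
Proof.
move=> en hs hr l.
have hl := @lbound n 3 isT (ltac:(lia)).
rewrite -/l /= in hl.
have h8 := binhalf n 3; rewrite /= in h8.
have h6 := bin3E n.
move: h8 h6; set A := 'C(n, 3); set B := 'C(n./2, 3) => h8 h6.
have hd : 8 * (s - l.+1) >= s + 4.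
  clearbody l; clear -en hs hr hl; lia.
have hh : 2 * uphalf n <= n + 1 by lia.
have hA : 2 * (s * uphalf n * l) <= A.
  have h1 : (3 * s) * (2 * uphalf n) * (4 * l) <= n * (n+1) * (n+2).
    by apply: leq_mul; [apply: leq_mul|]; lia.
  have h2 : n * (n+1) * (n+2) <= 2 * (n * n.-1 * n.-2) by apply: poly_b; lia.
  move: h1 h2 h6; set P := n * n.-1 * n.-2; set Q := n * (n+1) * (n+2).
  set Y := s * uphalf n * l.
  have -> : 3 * s * (2 * uphalf n) * (4 * l) = 24 * Y by rewrite /Y; clear; nia.
  lia.
split; first by lia.
rewrite -mulnA; apply: fin_b; [exact: h8 | exact: hd | by move: hA; rewrite !mulnA].
Qed.
Lemma fin_ac P s A B d Y : P * B <= A -> 16 <= P -> s <= 12 * d -> 48 * Y <= A ->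
  s * B + s * Y <= d * A.
Proof.
move=> h1 hP h2 h3.
have X1 : s * (P * B) <= s * A by rewrite leq_mul2l h1 orbT.
have X2 : s * A <= 12 * d * A by rewrite leq_mul2r h2 orbT.
have X3 : s * (48 * Y) <= s * A by rewrite leq_mul2l h3 orbT.
have X4 : 4 * (s * Y) <= d * A.
  have : 12 * (4 * (s * Y)) <= 12 * (d * A).
    have e1 : 12 * (4 * (s * Y)) = s * (48 * Y) by clear; nia.
    have e2 : 12 * d * A = 12 * (d * A) by rewrite mulnA.
    by rewrite e1 -e2; apply: leq_trans X3 X2.
  by rewrite leq_pmul2l.
have X5 : P * (4 * (s * Y)) <= P * (d * A) by rewrite leq_mul2l X4 orbT.
move: X1 X2 X5; set X := d * A; set Z := s * Y; set W := s * A.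
have -> : s * (P * B) = P * (s * B) by clear; nia.
set V := s * B.
have -> : 12 * d * A = 12 * X by rewrite /X; clear; nia.
move=> X1 X2 X5.
rewrite -(leq_pmul2l (isT : 0 < 4)) -(@leq_pmul2l P); last by lia.
have H : P * (4 * (V + Z)) = 4 * (P * V) + P * (4 * Z) by clear; nia.
rewrite H.
have H2 : 4 * (P * V) <= 48 * X by lia.
have H3 : 48 * X <= 3 * (P * X) by rewrite mulnA leq_mul2r; apply/orP; right; lia.
have -> : P * (4 * X) = 3 * (P * X) + P * X by clear; nia.
by apply: leq_add => //; apply: leq_trans H2 H3.
Qed.

Lemma poly_ac n : 29 <= n -> 96 * ((n+1) * (n+4)) <= n * n.-1 * n.-2 * n.-2.-1.
Proof. move=> h. have [m ->] : exists m, n = m + 29 by exists (n-29); lia.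
have -> : (m+29).-2.-1 = m + 26 by lia.
have -> : (m+29).-2 = m + 27 by lia. have -> : (m+29).-1 = m+28 by lia.
nia. Qed.

Lemma six_l l K n : l * K <= n + K - 2 -> 6 <= K -> 6 * l <= n + 4.
Proof.
case: l => [|l] h1 h2; first lia.
have : 6 * l <= l * K by rewrite mulnC leq_mul2l h2 orbT.
move: h1; rewrite mulSn; lia.
Qed.

Lemma case_ac n s k r : n = s * k + r -> 4 <= k -> 1 <= r <= k - 1 -> 6 <= s -> 28 <= s * k ->
  let l := l_param n k in
  12 * l.+1 + s <= 12 * s ->
  l.+1 <= s /\ s * 'C(n./2, k) + s * uphalf n * l <= (s - l.+1) * 'C(n, k).
Proof.
move=> en hk hr hs hsk l hl12.
have n29 : 29 <= n by lia.
have n2k : k.*2 <= n.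
  have : 6 * k <= s * k by rewrite leq_mul2r hs orbT.
  lia.
have hl := @lbound n k (ltac:(lia)) (ltac:(lia)).
rewrite -/l in hl.
have h6l : 6 * l <= n + 4 by apply: (@six_l l (2 * k.-1) n hl); lia.
have hP := binhalf n k.
have P16 : 16 <= 2 ^ k.
  have : 2 ^ 4 <= 2 ^ k by rewrite leq_pexp2l.
  done.
have h4 : 'C(n, 4) <= 'C(n, k) by apply: binmono.
have hb4 := bin4E n.
have hpoly := @poly_ac n n29.
move: hP h4 hb4; set A := 'C(n, k); set B := 'C(n./2, k) => hP h4 hb4.
have hh : 2 * uphalf n <= n + 1 by lia.
have hA : 48 * (uphalf n * l) <= A.
  have h1 : (2 * uphalf n) * (6 * l) <= (n + 1) * (n + 4) by apply: leq_mul.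
  have e : 24 * (48 * (uphalf n * l)) = 96 * ((2 * uphalf n) * (6 * l)) by clear; nia.
  have : 24 * (48 * (uphalf n * l)) <= 24 * A.
    rewrite e; apply: leq_trans (leq_mul (leqnn 96) h1) _.
    apply: leq_trans hpoly _; rewrite -hb4 mulnC leq_mul2l h4 orbT //.
  by rewrite leq_pmul2l.
split; first by lia.
rewrite -mulnA; apply: (@fin_ac (2 ^ k) s A B (s - l.+1) (uphalf n * l) hP P16) => //; lia.
Qed.
Lemma la9 l s K : l * (2 * K) <= s * K + s + K + K + K - 2 -> 3 <= K -> 9 <= s ->
  12 * l.+1 + s <= 12 * s.
Proof.
move=> h2 hK hs.
have hp : 3 * s + 9 * K <= s * K + 27.
  have [a ->] : exists a, s = a + 9 by exists (s - 9); lia.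
  have [b ->] : exists b, K = b + 3 by exists (K - 3); lia.
  nia.
have : (2 * K) * (12 * l) <= (2 * K) * (11 * s - 12).
  have e1 : (2 * K) * (12 * l) = 12 * (l * (2 * K)) by clear; nia.
  have e2 : (2 * K) * (11 * s - 12) = 22 * (s * K) - 24 * K by clear; nia.
  rewrite e1 e2; move: h2 hp; set LK := l * (2 * K); set SK := s * K; lia.
rewrite leq_pmul2l; last lia.
lia.
Qed.


Lemma l12 n s k r : n = s * k + r -> 1 <= r <= k - 1 -> 4 <= k ->
  [\/ 7 <= s | (7 <= k) && (s == 6)] -> 12 * (l_param n k).+1 + s <= 12 * s.
Proof.
move=> en hr hk hs.
have hl := @lbound n k (ltac:(lia)) (ltac:(lia)).
move: hl; set l := l_param n k => hl.
have [K eK] : exists K, K = k.-1 by eexists.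
rewrite -eK in hl.
have ek : k = K.+1 by lia.
subst k n.
have h2 : l * (2 * K) <= s * K + s + K + K + K - 2.
  move: hl; rewrite mulnS; lia.
case: hs => [hs|/andP [hK /eqP hs]].
  case: (ltngtP s 9) => hs9.
  - case: (ltngtP s 8) => hs8.
    + have es : s = 7 by lia.
      subst s.
      have : l <= 5.
        rewrite leqNgt; apply/negP => hl5.
        have : 6 * (2 * K) <= l * (2 * K) by rewrite leq_mul2r hl5 orbT.
        lia.
      lia.
    + lia.
    + subst s.
      have : l <= 6.
        rewrite leqNgt; apply/negP => hl6.
        have : 7 * (2 * K) <= l * (2 * K) by rewrite leq_mul2r hl6 orbT.
        lia.
      lia.
  - apply: (@la9 l s K) => //; lia.
  - subst s; apply: (@la9 l 9 K) => //; lia.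
subst s.
have : l <= 4.
  rewrite leqNgt; apply/negP => hl5.
  have : 5 * (2 * K) <= l * (2 * K) by rewrite leq_mul2r hl5 orbT.
  lia.
lia.
Qed.

Lemma numeric n s k r : n = s * k + r -> 2 <= s -> 3 <= k -> 1 <= r <= k - 1 ->
  [\/ (4 <= k) && (7 <= s), (k == 3) && (17 <= s) | (7 <= k) && (s == 6)] ->
  'C(n, k) <= s * t2 n k.
Proof.
move=> en hs hk hr hc.
have key : (l_param n k).+1 <= s /\
   s * 'C(n./2, k) + s * uphalf n * l_param n k <= (s - (l_param n k).+1) * 'C(n, k).
  case: hc => [/andP [hk4 hs7] | /andP [/eqP ek hs17] | /andP [hk7 /eqP es]].
  - have hsk : 28 <= s * k by have := leq_mul hs7 hk4; lia.
    have h12 := @l12 n s k r en hr hk4 (or_introl hs7).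
    apply: (@case_ac n s k r en) => //; lia.
  - subst k; exact: (@case_b n s r en).
  - have hsk : 28 <= s * k by rewrite es; lia.
    have h12 : 12 * (l_param n k).+1 + s <= 12 * s.
      apply: (@l12 n s k r en) => //; first lia.
      by right; rewrite hk7 es.
    apply: (@case_ac n s k r en) => //; lia.
case: key => k1 k2.
apply: combine => //.
apply: t2_low; lia.
Qed.


Lemma sc t D : \sum_(j : 'I_t) D = t * D.
Proof. by rewrite sum_nat_const card_ord. Qed.
Lemma card_split (T : finType) (P Q : pred T) :
  #|[set x | P x && Q x]| + #|[set x | ~~ P x && Q x]| = #|[set x | Q x]|.
Proof.
rewrite -(cardsID [set x | P x] [set x | Q x]).
have -> : [set x | P x && Q x] = [set x | Q x] :&: [set x | P x].
  by apply/setP => x; rewrite !inE andbC.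
have -> : [set x | ~~ P x && Q x] = [set x | Q x] :\: [set x | P x].
  by apply/setP => x; rewrite !inE andbC.
done.
Qed.

Section Bar.
Variables (n k s t : nat).
Hypotheses (k0 : 0 < k) (kn : k <= n) (s0 : 0 < s) (skn : s * k <= n)
  (Nst : 'C(n, k) <= s * t).

Local Notation N := 'C(n, k).

Lemma cls_lt (p : 'I_N) : p %/ s < t.
Proof. rewrite ltn_divLR // mulnC; exact: leq_trans (ltn_ord p) Nst. Qed.

Definition cls (p : 'I_N) : 'I_t := Ordinal (cls_lt p).

Lemma N0 : 0 < N. Proof. by rewrite bin_gt0. Qed.
Definition p0 : 'I_N := Ordinal N0.

Definition low m : {set 'I_n} := [set i : 'I_n | i < m].

Definition Inv m (g : 'I_N -> {set 'I_n}) :=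
  [/\ forall p, g p \subset low m,
      forall p q x, p != q -> cls p = cls q -> x \in g p -> x \in g q -> False,
      forall S : {set 'I_n}, S \subset low m ->
        #|[set p | g p == S]| = (if #|S| <= k then 'C(n - m, k - #|S|) else 0)
    & forall j : 'I_t, \sum_(p | cls p == j) (k - #|g p|) <= n - m ].

Lemma fiber_le (j : 'I_t) : #|[set p | cls p == j]| <= s.
Proof.
pose h (p : 'I_N) : 'I_s := Ordinal (ltn_pmod p s0).
rewrite -(card_in_imset (f := h)); first by apply: leq_trans (max_card _) _; rewrite card_ord.
move=> p q; rewrite !inE => /eqP hp /eqP hq /(congr1 val) /= hpq.
apply: val_inj; rewrite /= (divn_eq p s) (divn_eq q s) hpq.
by move: hp hq => /(congr1 val) /= -> /(congr1 val) /= ->.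
Qed.

Lemma Inv0 : Inv 0 (fun _ => set0).
Proof.
split.
- by move=> p; apply: sub0set.
- by move=> p q x _ _; rewrite inE.
- move=> S SL.
  have -> : S = set0.
    apply/setP => i; rewrite inE; apply/negP => iS.
    by move: (subsetP SL i iS); rewrite inE.
  rewrite cards0 subn0 subn0 /= (_ : [set p | set0 == set0] = setT) ?cardsT ?card_ord //.
  by apply/setP => p; rewrite !inE eqxx.
- move=> j; rewrite (eq_bigr (fun _ => k)); last by move=> p _; rewrite cards0 subn0.
  rewrite sum_nat_cond_const subn0; apply: leq_trans skn.
  by rewrite leq_mul2r fiber_le orbT.
Qed.


Lemma Inv_step m g : m < n -> Inv m g -> exists g', Inv m.+1 g'.
Proof.
move=> hm [I1 I2 I3 I4].
set D := n - m.
have D0 : 0 < D by rewrite subn_gt0.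
pose mi : 'I_n := Ordinal hm.
have glow p x : x \in g p -> x < m by move/(subsetP (I1 p)); rewrite inE.
have mi_low p : mi \notin g p by apply/negP => /glow; rewrite ltnn.
have gT p : g p != setT by apply/negP => /eqP e; move: (mi_low p); rewrite e inE.
pose R (j : 'I_t) := \sum_(p | cls p == j) (k - #|g p|).
pose cnt (j : 'I_t) (S : {set 'I_n}) := #|[set p | (cls p == j) && (g p == S)]|.
pose b' (S : {set 'I_n}) :=
  if (S \subset low m) && (#|S| < k) then 'C(D.-1, (k - #|S|).-1) else 0.
pose w (j : 'I_t) (S : {set 'I_n}) := if S == setT then D - R j else cnt j S * (k - #|S|).
pose b (S : {set 'I_n}) := if S == setT then t - \sum_(S' | S' != setT) b' S' else b' S.
have Rid j : R j = \sum_(S | S != setT) cnt j S * (k - #|S|).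
  rewrite /R (partition_big g (fun S => S != setT)) /=; last by move=> p _; exact: gT.
  apply: eq_bigr => S _.
  rewrite (eq_bigr (fun _ => k - #|S|)); last by move=> p /andP [_ /eqP ->].
  by rewrite sum_nat_cond_const.
have colS S : \sum_j cnt j S = #|[set p | g p == S]|.
  rewrite -[RHS]muln1 -sum_nat_cond_const (partition_big cls xpredT) //=.
  apply: eq_bigr => j _; rewrite sum_nat_cond_const muln1 /cnt.
  by apply: eq_card => p; rewrite !inE andbC.
have hrow j : \sum_S w j S = D.
  rewrite (bigD1 setT) //= /w eqxx.
  rewrite (eq_bigr (fun S => cnt j S * (k - #|S|))); last by move=> S /negbTE ->.
  by rewrite -Rid subnK // I4.
have hcol' S : S != setT -> \sum_j w j S = D * b' S.
  move=> ST; rewrite /w (negbTE ST) -big_distrl /= colS /b'.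
  case: (boolP (S \subset low m)) => SL /=.
    rewrite I3 //.
    case: (ltngtP #|S| k) => hSk.
      by rewrite -/D mul_bin_diag prednK ?subn_gt0 // mulnC.
    - by rewrite muln0.
    - by rewrite hSk subnn muln0 muln0.
  rewrite (_ : [set p | g p == S] = set0) ?cards0 ?muln0 //.
  apply/setP => p; rewrite !inE; apply/negP => /eqP gp.
  by move/negP: SL; apply; rewrite -gp.
have hcol S : \sum_j w j S = D * b S.
  case: (eqVneq S setT) => [->|ST]; last by rewrite /b (negbTE ST) hcol'.
  rewrite /b /w eqxx sumnB; last by move=> j _; exact: I4.
  rewrite sum_nat_const card_ord.
  have -> : \sum_j R j = D * \sum_(S' | S' != setT) b' S'.
    rewrite (eq_bigr _ (fun j _ => Rid j)) exchange_big big_distrr /=.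
    apply: eq_bigr => S1 ST; rewrite -hcol' //; apply: eq_bigr => j _.
    by rewrite /w (negbTE ST).
  by rewrite mulnBr mulnC.
have [f [hf hfib]] := wassign setT D0 hrow hcol.
have fS j : f j != setT -> #|f j| < k /\ exists p, (cls p == j) && (g p == f j).
  move=> fT; have := hf j; rewrite /w (negbTE fT) muln_gt0 subn_gt0 => /andP [c1 c2].
  split=> //; case/card_gt0P: c1 => p; rewrite inE => hp; by exists p.
have fT j : f j == setT -> R j < D.
  by move=> e; have := hf j; rewrite /w e subn_gt0.
pose sel (j : 'I_t) : option 'I_N :=
  if f j == setT then None else [pick p | (cls p == j) && (g p == f j)].
have selP j p : sel j = Some p -> [/\ cls p = j, g p = f j & f j != setT].
  rewrite /sel; case: eqP => // fjT.
  case: pickP => // q /andP [/eqP cq /eqP gq] [<-]; split=> //; exact/eqP.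
have selE j : f j != setT -> exists p, sel j = Some p.
  move=> fjT; rewrite /sel (negbTE fjT); case: pickP => [p _|none]; first by exists p.
  by case: (fS j fjT) => _ [p hp]; move: (none p); rewrite hp.
pose aug p := [exists j, sel j == Some p].
have augE p : aug p = (sel (cls p) == Some p).
  apply/existsP/idP => [[j /eqP sj]|sj]; last by exists (cls p).
  by have [cp _ _] := selP _ _ sj; rewrite cp sj.
pose g' p := if aug p then mi |: g p else g p.
have augcnt S0 : S0 != setT -> #|[set p | aug p && (g p == S0)]| = b' S0.
  move=> S0T.
  pose selp j := odflt p0 (sel j).
  have -> : [set p | aug p && (g p == S0)] = selp @: [set j | f j == S0].
    apply/setP => p; rewrite inE; apply/andP/imsetP.
    - case=> ap /eqP gp; rewrite augE in ap.
      have [_ gpf _] := selP _ _ (eqP ap).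
      exists (cls p); first by rewrite inE -gpf gp.
      by rewrite /selp (eqP ap).
    - case=> j; rewrite inE => /eqP fj ->.
      have fjT : f j != setT by rewrite fj.
      case: (selE j fjT) => q sj; rewrite /selp sj /=.
      have [cp gp _] := selP _ _ sj.
      by rewrite augE cp sj eqxx gp fj.
  rewrite card_in_imset; first by rewrite hfib /b (negbTE S0T).
  move=> j1 j2; rewrite !inE => /eqP f1 /eqP f2; rewrite /selp.
  have f1T : f j1 != setT by rewrite f1.
  have f2T : f j2 != setT by rewrite f2.
  case: (selE j1 f1T) => p1 s1; case: (selE j2 f2T) => p2 s2.
  rewrite s1 s2 /= => e; subst p2.
  by have [<- _ _] := selP _ _ s1; have [<- _ _] := selP _ _ s2.
have g'E p x : x \in g' p = ((x == mi) && aug p) || (x \in g p).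
  rewrite /g'; case: (aug p); rewrite ?inE ?andbT ?andbF //.
exists g'; split.
- move=> p; apply/subsetP => x; rewrite g'E inE => /orP [/andP [/eqP -> _]|/glow] //.
  by move=> h; apply: ltnW.
- move=> p q x pq cpq; rewrite !g'E.
  case: (eqVneq x mi) => [->|xm] /=.
    rewrite (negbTE (mi_low p)) (negbTE (mi_low q)) !orbF !augE cpq => /eqP sp /eqP sq.
    by move/negP: pq; apply; move: sp; rewrite sq => -[->].
  exact: I2 pq cpq.
- move=> S SL.
  case: (boolP (mi \in S)) => miS.
    have SL0 : S :\ mi \subset low m.
      apply/subsetP => x; rewrite !inE => /andP [xm xS].
      move: (subsetP SL x xS); rewrite inE ltnS leq_eqVlt => /orP [/eqP e|//].
      by case/negP: xm; apply/eqP; apply: val_inj; exact: e.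
    have -> : [set p | g' p == S] = [set p | aug p && (g p == S :\ mi)].
      apply/setP => p; rewrite !inE /g'; case: (aug p) => /=.
        apply/eqP/eqP => [<-|->]; first by rewrite setU1K.
        by rewrite setD1K.
      apply/negP => /eqP e; move: miS; rewrite -e; apply/negP; exact: mi_low.
    rewrite augcnt; last first.
      apply/negP => /eqP e; move: (setD11 mi S); rewrite e inE.
      done.
    rewrite /b' SL0 /= (cardsD1 mi S) miS add1n.
    rewrite (_ : n - m.+1 = D.-1) ?subnS //; rewrite /D; lia.
  have SL0 : S \subset low m.
    apply/subsetP => x xS; move: (subsetP SL x xS); rewrite !inE ltnS leq_eqVlt.
    case/orP => [/eqP e|//]; case/negP: miS.
    by have <- : x = mi by apply: val_inj.
  have -> : [set p | g' p == S] = [set p | ~~ aug p && (g p == S)].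
    apply/setP => p; rewrite !inE /g'; case: (aug p) => //=.
    apply/negP => /eqP e; move/negP: miS; apply; rewrite -e; exact: setU11.
  have ST : S != setT by apply/negP => /eqP e; move: miS; rewrite e inE.
  have := card_split aug (fun p => g p == S).
  rewrite augcnt // I3 // /b' SL0 /= -/D (_ : n - m.+1 = D.-1); last by rewrite /D; lia.
  case: (ltngtP #|S| k) => hSk.
  - rewrite -[in X in _ = X -> _](prednK D0) -[in X in _ = X -> _](prednK (_ : 0 < k - #|S|)); last by rewrite subn_gt0.
    rewrite binS (prednK (_ : 0 < k - #|S|)); last by rewrite subn_gt0.
    move=> H; apply/eqP; rewrite -(eqn_add2l 'C(D.-1, (k - #|S|).-1)) H addnC; done.
  - lia.
  - rewrite hSk subnn !bin0; lia.
- move=> j; rewrite -/D (_ : n - m.+1 = D.-1); last by rewrite /D; lia.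
  case: (boolP (f j == setT)) => fjT.
    have : R j < D by exact: fT.
    rewrite /R [X in _ -> X <= _](eq_bigr (fun p => k - #|g p|)); first by move=> H; rewrite -ltnS prednK //; exact: H.
    move=> p /eqP cp; rewrite /g'.
    have -> : aug p = false.
      by rewrite augE cp /sel fjT.
    done.
  case: (selE j fjT) => p1 s1.
  have [cp1 gp1 _] := selP _ _ s1.
  have [fk _] := fS j fjT.
  have Rj : R j <= D by exact: I4.
  have E1 : \sum_(p | cls p == j) (k - #|g' p|) + 1 = R j.
    rewrite /R (bigD1 p1) /=; last by rewrite cp1.
    rewrite [RHS](bigD1 p1) /=; last by rewrite cp1.
    rewrite /g' augE cp1 s1 eqxx cardsU1 (mi_low p1) add1n.
    rewrite (eq_bigr (fun p => k - #|g p|)).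
      by rewrite gp1 subnS addnAC addn1 prednK // subn_gt0.
    move=> p /andP [/eqP cp pp1].
    have -> : aug p = false.
      rewrite augE cp s1; apply/negbTE; apply/eqP => -[e]; by rewrite e eqxx in pp1.
    done.
  have H : \sum_(p | cls p == j) (k - #|g' p|) <= D.-1 by lia.
  exact: H.
Qed.


Lemma Inv_final g : Inv n g -> colorable (@cKneser_adj n k) t.
Proof.
case=> I1 I2 I3 I4.
have ex (A : ksubset n k) : exists p, g p == val A.
  have : 0 < #|[set p | g p == val A]|.
    rewrite I3; last by apply/subsetP => i _; rewrite inE ltn_ord.
    by rewrite (eqP (valP A)) leqnn subnn subnn bin0.
  by case/card_gt0P => p; rewrite inE => hp; exists p.
pose col (A : ksubset n k) := if [pick p | g p == val A] is Some p then cls p else cls p0.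
apply/existsP; exists [ffun A => col A].
apply/forallP => A; apply/forallP => B; apply/implyP => /andP [AB AB0].
rewrite !ffunE /col.
case: pickP => [pA /eqP hA|]; last by case: (ex A) => p hp /(_ p); rewrite hp.
case: pickP => [pB /eqP hB|]; last by case: (ex B) => p hp /(_ p); rewrite hp.
apply/eqP => ec.
case/set0Pn: AB0 => x; rewrite inE => /andP [xA xB].
apply: (I2 pA pB x).
- apply/negP => /eqP epq; move/negP: AB; apply; apply/eqP/val_inj.
  by rewrite -hA -hB epq.
- exact: ec.
- by rewrite hA.
- by rewrite hB.
Qed.

Lemma Inv_all m : m <= n -> exists g, Inv m g.
Proof.
elim: m => [|m IH] hm; first by exists (fun _ => set0); exact: Inv0.
have [g hg] := IH (ltnW hm).
exact: Inv_step hm hg.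
Qed.

Lemma colorable_t : colorable (@cKneser_adj n k) t.
Proof. have [g hg] := Inv_all (leqnn n); exact: Inv_final hg. Qed.

End Bar.

Lemma chi_le n k s t : 0 < k -> k <= n -> 0 < s -> s * k <= n -> 'C(n, k) <= s * t ->
  chi_cKneser n k <= t.
Proof.
move=> k0 kn s0 skn Nst.
rewrite /chi_cKneser /chromatic_number.
case: ex_minnP => m _ hmin; apply: hmin.
exact: (colorable_t k0 kn s0 skn Nst).
Qed.



Theorem lemma4p2 (n s k r : nat) :
  n = s * k + r -> 2 <= s -> 3 <= k -> 1 <= r <= k - 1 ->
  [\/ (4 <= k) && (7 <= s), (k == 3) && (17 <= s) | (7 <= k) && (s == 6)] ->
  chi_cKneser n k <= t2 n k.
Proof.
move=> en hs hk hr hc.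
have hN := @numeric n s k r en hs hk hr hc.
have skn : s * k <= n by lia.
apply: (@chi_le n k s (t2 n k)) => //.
- lia.
- by apply: leq_trans skn; apply: leq_pmull; lia.
- lia.
Qed.
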